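(* A descriptive $\mathsf{MS4}$-frame $\mathfrak{G}=(Y,R,E)$ validates $\mathsf{LKur}=\mathsf{MS4}+\Box\forall\Diamond\Box p\to\Diamond\forall p$ if and only if it satisfies the local Kuroda principle: for every $x\in\operatorname{qmax}Y$ there is $y$ with $xE_Ry$ such that $E[y]\subseteq\operatorname{qmax}Y$.
   Context: $\mathsf{MS4}$ is the smallest set of formulas in the classical bimodal language $\mathcal{L}_{\Box\forall}$ containing all classical tautologies, the $\mathsf{S4}$ axioms for $\Box$, the $\mathsf{S5}$ axioms for $\forall$, and $\Box\forall p\to\forall\Box p$, closed under modus ponens, substitution, $\Box$- and $\forall$-necessitation; $\Diamond=\neg\Box\neg$. A descriptive $\mathsf{MS4}$-frame is a triple $(Y,R,E)$ where $Y$ is a Stone space (compact, Hausdorff, zero-dimensional), $R$ is a quasi-order and $E$ an equivalence relation on $Y$, both continuous (i.e., the image $R[x]=\{y:xRy\}$ is closed for each $x$ and $R^{-1}[U]$ is clopen for each clopen $U$; same for $E$), and $xEy$, $yRz$ imply there is $u$ with $xRu$ and $uEz$. Formulas are evaluated under valuations assigning clopen subsets to letters, $\Box$ via $R$, $\forall$ via $E$; validity means truth everywhere under all such valuations. $\operatorname{qmax}Y=\{x: xRy\Rightarrow yRx\}$ is the set of quasi-maximal points; $xE_Ry$ iff $xRy$ and $yRx$. *)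

(* Defs.v *)
From HB Require Import structures.
From mathcomp Require Import all_boot all_order.
From mathcomp Require Import all_classical topology.
Set Implicit Arguments. Unset Strict Implicit. Unset Printing Implicit Defensive.
Local Open Scope classical_set_scope.

Inductive form : Type :=
  | Var : nat -> form
  | Bot : form
  | Imp : form -> form -> form
  | Box : form -> form
  | All : form -> form.

Definition Neg (a : form) := Imp a Bot.
Definition Top := Neg Bot.
Definition Dia (a : form) := Neg (Box (Neg a)).
Definition Ex (a : form) := Neg (All (Neg a)).

(** Classical tautologies: formulas true under every boolean valuation of
    their maximal non-propositional subformulas (variables, Box-, All-formulas)
    i.e. substitution instances of propositional tautologies. *)
Fixpoint beval (v : form -> bool) (a : form) : bool :=
  match a with
  | Bot => false
  | Imp a b => (~~ beval v a) || beval v b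
  | _ => v a
  end.
Definition tautology (a : form) := forall v : form -> bool, beval v a.

Fixpoint subst (s : nat -> form) (a : form) : form :=
  match a with
  | Var n => s n
  | Bot => Bot
  | Imp a b => Imp (subst s a) (subst s b)
  | Box a => Box (subst s a)
  | All a => All (subst s a)
  end.

Definition p0 := Var 0.
Definition p1 := Var 1.

Inductive MS4_axiom : form -> Prop :=
  | ax_taut a : tautology a -> MS4_axiom a
  | ax_boxK : MS4_axiom (Imp (Box (Imp p0 p1)) (Imp (Box p0) (Box p1)))
  | ax_boxT : MS4_axiom (Imp (Box p0) p0)
  | ax_box4 : MS4_axiom (Imp (Box p0) (Box (Box p0)))
  | ax_allK : MS4_axiom (Imp (All (Imp p0 p1)) (Imp (All p0) (All p1)))
  | ax_allT : MS4_axiom (Imp (All p0) p0)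
  | ax_all5 : MS4_axiom (Imp (Ex p0) (All (Ex p0)))
  | ax_comm : MS4_axiom (Imp (Box (All p0)) (All (Box p0))).

Definition lkur_axiom : form := Imp (Box (All (Dia (Box p0)))) (Dia (All p0)).

Inductive LKur : form -> Prop :=
  | LKur_ax a : MS4_axiom a -> LKur a
  | LKur_kur : LKur lkur_axiom
  | LKur_mp a b : LKur (Imp a b) -> LKur a -> LKur b
  | LKur_subst s a : LKur a -> LKur (subst s a)
  | LKur_nec_box a : LKur a -> LKur (Box a)
  | LKur_nec_all a : LKur a -> LKur (All a).

Definition image {Y : Type} (R : Y -> Y -> Prop) (x : Y) : set Y := [set y | R x y].
Definition preimage {Y : Type} (R : Y -> Y -> Prop) (U : set Y) : set Y :=
  [set x | exists2 y, U y & R x y].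

Definition continuous_rel {Y : topologicalType} (R : Y -> Y -> Prop) :=
  (forall x, closed (image R x)) /\
  (forall U : set Y, clopen U -> clopen (preimage R U)).

Definition stone_space (Y : topologicalType) :=
  [/\ compact [set: Y], hausdorff_space Y & zero_dimensional Y].

Definition quasi_order {Y : Type} (R : Y -> Y -> Prop) :=
  (forall x, R x x) /\ (forall x y z, R x y -> R y z -> R x z).

Definition equivalence_rel {Y : Type} (E : Y -> Y -> Prop) :=
  [/\ (forall x, E x x), (forall x y, E x y -> E y x)
     & (forall x y z, E x y -> E y z -> E x z)].

Definition descriptive_MS4_frame (Y : topologicalType) (R E : Y -> Y -> Prop) :=
  [/\ stone_space Y, quasi_order R, equivalence_rel E,
      (continuous_rel R /\ continuous_rel E)
    & (forall x y z, E x y -> R y z -> exists2 u, R x u & E u z)].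

Fixpoint sat {Y : Type} (R E : Y -> Y -> Prop) (V : nat -> set Y)
    (x : Y) (a : form) : Prop :=
  match a with
  | Var n => V n x
  | Bot => False
  | Imp a b => sat R E V x a -> sat R E V x b
  | Box a => forall y, R x y -> sat R E V y a
  | All a => forall y, E x y -> sat R E V y a
  end.

Definition valid_in {Y : topologicalType} (R E : Y -> Y -> Prop) (a : form) :=
  forall V : nat -> set Y, (forall n, clopen (V n)) ->
  forall x : Y, sat R E V x a.

Definition validates_LKur {Y : topologicalType} (R E : Y -> Y -> Prop) :=
  forall a, LKur a -> valid_in R E a.

Definition qmax {Y : Type} (R : Y -> Y -> Prop) : set Y :=
  [set x | forall y, R x y -> R y x].

Definition ER {Y : Type} (R : Y -> Y -> Prop) (x y : Y) := R x y /\ R y x.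

Definition local_Kuroda {Y : Type} (R E : Y -> Y -> Prop) :=
  forall x, qmax R x -> exists y, ER R x y /\ image E y `<=` qmax R.

(* Main.v *)
Require Import Defs.
From mathcomp Require Import all_boot all_classical topology.
Set Implicit Arguments. Unset Strict Implicit. Unset Printing Implicit Defensive.
Local Open Scope classical_set_scope.

Lemma directed_inter (Y : topologicalType) (P : set Y -> Prop) :
  compact [set: Y] -> (forall B, P B -> closed B) -> (forall B, P B -> B !=set0) ->
  (forall B1 B2, P B1 -> P B2 -> exists2 B3, P B3 & B3 `<=` B1 `&` B2) ->
  (exists B, P B) -> exists y, forall B, P B -> B y.
Proof.
move=> cpt cl ne dir ex.
have FF : Filter (filter_from P id) by apply: filter_from_filter.
have PF : ProperFilter (filter_from P id) by apply: filter_from_proper.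
have [p [_ clp]] := cpt _ PF (filterT).
exists p => B PB; apply: (cl _ PB) => C nC.
have := clp B C; rewrite setIC; apply => //; by exists B.
Qed.

Lemma clopenC' (Y : topologicalType) (A : set Y) : clopen A -> clopen (~` A).
Proof. by move=> h; exact: (@clopenC _ A A h). Qed.

Lemma separation (Y : topologicalType) (K : set Y) (w : Y) :
  stone_space Y -> closed K -> ~ K w ->
  exists U, [/\ clopen U, K `<=` U & ~ U w].
Proof.
move=> [cpt _ zd] clK nKw.
case: (pselect (exists U, [/\ clopen U, K `<=` U & ~ U w])) => // nU.
exfalso.
pose P := fun S : set Y => exists2 V, (clopen V /\ V w) & S = K `&` V.
have [||||k Hk] := @directed_inter Y P cpt.
- by move=> B [V [[_ ?] _] ->]; exact: closedI.
- move=> B [V [cV Vw] ->]; apply/set0P/negP => /eqP e.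
  apply: nU; exists (~` V); split => //; first exact: clopenC'.
  by move=> y Ky Vy; have : (K `&` V) y by []; rewrite e.
- move=> B1 B2 [V1 [c1 w1] ->] [V2 [c2 w2] ->].
  exists (K `&` (V1 `&` V2)); first by exists (V1 `&` V2) => //; split; [exact: clopenI|].
  by move=> y [Ky [V1y V2y]].
- by exists K; rewrite /P; exists setT; [split; [exact: clopenT|]| rewrite setIT].
have Kk : K k by exact: (Hk K (ex_intro2 _ _ setT (conj clopenT I) (esym (setIT K)))).
have wk : w != k by apply/eqP => e; apply: nKw; rewrite e.
have [U [cU Uw nUk]] := zd w k wk.
have [] := Hk (K `&` U); first by exists U.
by move=> _ /nUk.
Qed.

Lemma qmax_above (Y : topologicalType) (R E : Y -> Y -> Prop) :
  descriptive_MS4_frame R E -> forall x, exists m, R x m /\ qmax R m.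
Proof.
move=> [[cpt _ _] [Rr Rt] _ [[Rcl _] _] _] x.
pose T := {y : Y | R x y}.
pose t0 : T := exist _ x (Rr x).
pose rl := fun a b : T => `[< R (sval a) (sval b) >].
have [||A totA|t Ht] := @ZL_preorder T t0 rl.
- by move=> a; apply/asboolP.
- by move=> a b c /asboolP h1 /asboolP h2; apply/asboolP; exact: Rt h2.
- case: (pselect (exists a, A a)) => [[a0 Aa0]|nA]; last first.
    by exists t0 => s As; exfalso; apply: nA; exists s.
  pose P := fun S : set Y => exists2 a, A a & S = Defs.image R (sval a).
  have [||||y Hy] := @directed_inter Y P cpt.
  + by move=> B [a _ ->]; exact: Rcl.
  + by move=> B [a _ ->]; exists (sval a); exact: Rr.
  + move=> B1 B2 [a1 A1 ->] [a2 A2 ->].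
    have [/asboolP h|/asboolP h] := totA _ _ A1 A2.
    * exists (Defs.image R (sval a2)); first by exists a2.
      by move=> z Hz; split => //; exact: Rt h Hz.
    * exists (Defs.image R (sval a1)); first by exists a1.
      by move=> z Hz; split => //; exact: Rt h Hz.
  + by exists (Defs.image R (sval a0)); exists a0.
  have xy : R x y.
    have := Hy (Defs.image R (sval a0)) (ex_intro2 _ _ a0 Aa0 erefl).
    by apply: Rt; exact: (svalP a0).
  exists (exist _ y xy) => s As; apply/asboolP.
  exact: (Hy (Defs.image R (sval s)) (ex_intro2 _ _ s As erefl)).
- exists (sval t); split; first exact: (svalP t).
  move=> w tw.
  have xw : R x w by apply: Rt tw; exact: (svalP t).
  have := Ht (exist _ w xw); rewrite /rl /= => h.
  by have /asboolP := h (asboolT tw).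
Qed.

Lemma clopen_box (Y : topologicalType) (R : Y -> Y -> Prop) (A : set Y) :
  continuous_rel R -> clopen A -> clopen [set x | forall y, R x y -> A y].
Proof.
move=> [_ Rc] cA.
have -> : [set x | forall y, R x y -> A y] = ~` Defs.preimage R (~` A).
  apply/seteqP; split => x /=.
  - by move=> h [y nAy Rxy]; exact: nAy (h _ Rxy).
  - move=> h y Rxy; case: (pselect (A y)) => // nAy.
    by exfalso; apply: h; exists y.
by apply: clopenC'; apply: Rc; exact: clopenC'.
Qed.

Lemma sat_clopen (Y : topologicalType) (R E : Y -> Y -> Prop) (V : nat -> set Y) :
  continuous_rel R -> continuous_rel E -> (forall n, clopen (V n)) ->
  forall a, clopen [set x | sat R E V x a].
Proof.
move=> cR cE cV; elim => [n|||a IH|a IH] /=.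
- by rewrite (_ : [set x | V n x] = V n).
- by rewrite (_ : [set x | False] = set0) //; exact: clopen0.
- move=> a IHa b IHb.
  have -> : [set x | sat R E V x a -> sat R E V x b] =
     ~` [set x | sat R E V x a] `|` [set x | sat R E V x b].
    apply/seteqP; split => x /=.
    + by move=> h; case: (pselect (sat R E V x a)) => ha; [right; exact: h|left].
    + by case => h ha //; exfalso; exact: h.
  by apply: clopenU => //; exact: clopenC'.
- exact: (clopen_box cR IH).
- exact: (clopen_box cE IH).
Qed.

Lemma sat_subst (Y : Type) (R E : Y -> Y -> Prop) (V : nat -> set Y) s a :
  forall x, sat R E V x (subst s a) <->
            sat R E (fun n => [set y | sat R E V y (s n)]) x a.
Proof.
elim: a => [n||a IHa b IHb|a IH|a IH] x /=; first by [].
- by [].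
- split => h ha.
  + by apply/IHb; apply: h; apply/IHa.
  + by apply/IHb; apply: h; apply/IHa.
- by split => h y Rxy; apply/IH; apply: h.
- by split => h y Rxy; apply/IH; apply: h.
Qed.

Lemma taut_sound (Y : Type) (R E : Y -> Y -> Prop) (V : nat -> set Y) a x :
  tautology a -> sat R E V x a.
Proof.
move=> /(_ (fun b => `[< sat R E V x b >])).
suff : forall b, beval (fun b => `[< sat R E V x b >]) b <-> sat R E V x b.
  by move=> h /h.
elim => [n|||b IH|b IH] /=; try by split => /asboolP.
- by [].
- move=> b IHb c IHc; split.
  + by case/orP => [/negP h hb|/IHc //]; exfalso; apply: h; apply/IHb.
  + move=> h; case: (pselect (sat R E V x b)) => hb.
    * by apply/orP; right; apply/IHc; exact: h.
    * by apply/orP; left; apply/negP => /IHb.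
Qed.

Lemma ax_sound (Y : topologicalType) (R E : Y -> Y -> Prop) (V : nat -> set Y) a x :
  descriptive_MS4_frame R E -> MS4_axiom a -> sat R E V x a.
Proof.
move=> [_ [Rr Rt] [Er Es Et] _ cm]; case => /=.
- by move=> b; exact: taut_sound.
- by move=> h1 h2 y Rxy; apply: h1 => //; exact: h2.
- by move=> h; exact: h.
- by move=> h y Rxy z Ryz; apply: h; exact: Rt Ryz.
- by move=> h1 h2 y Rxy; apply: h1 => //; exact: h2.
- by move=> h; exact: h.
- move=> h y Exy h2; apply: h => z Exz; apply: h2; apply: Et (Es _ _ Exy) Exz.
- move=> h y Exy z Ryz; have [u Rxu Euz] := cm _ _ _ Exy Ryz; exact: h Rxu _ Euz.
Qed.

Lemma kur_sound (Y : topologicalType) (R E : Y -> Y -> Prop) (V : nat -> set Y) x :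
  descriptive_MS4_frame R E -> local_Kuroda R E -> sat R E V x lkur_axiom.
Proof.
move=> fr lk; have [_ [Rr Rt] _ _ _] := fr.
rewrite /lkur_axiom /Dia /Neg /= => H H2.
have [m [xm qm]] := qmax_above fr x.
have [y [[my ym] Ey]] := lk m qm.
apply: (H2 y (Rt _ _ _ xm my)) => w Eyw.
case: (pselect (V 0 w)) => // nV; exfalso.
apply: (H y (Rt _ _ _ xm my) w Eyw) => u Rwu Hbox.
by apply: nV; apply: Hbox; exact: (Ey w Eyw).
Qed.

Lemma LKur_sound (Y : topologicalType) (R E : Y -> Y -> Prop) :
  descriptive_MS4_frame R E -> local_Kuroda R E -> validates_LKur R E.
Proof.
move=> fr lk a; have [_ _ _ [cR cE] _] := fr.
elim => {a} [a ax|| a b _ IHab _ IHa | s a _ IH | a _ IH | a _ IH] V cV x /=.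
- exact: ax_sound.
- exact: kur_sound.
- exact: (IHab V cV x (IHa V cV x)).
- apply/sat_subst; apply: IH => n; exact: sat_clopen.
- by move=> y _; exact: IH.
- by move=> y _; exact: IH.
Qed.

Lemma LKur_complete (Y : topologicalType) (R E : Y -> Y -> Prop) :
  descriptive_MS4_frame R E -> validates_LKur R E -> local_Kuroda R E.
Proof.
move=> fr val x qx; have [st [Rr Rt] [Er Es Et] [cR cE] cm] := fr.
have [cpt _ _] := st.
case: (pselect (exists y, ER R x y /\ Defs.image E y `<=` qmax R)) => // nK.
exfalso.
have key : forall z, R x z -> exists w, E z w /\ ~ qmax R w.
  move=> z xz; apply: contrapT => nw; apply: nK; exists z.
  split; first by split => //; exact: qx.
  by move=> w Ezw; apply: contrapT => nq; apply: nw; exists w.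
pose P := fun S : set Y => exists2 U, (clopen U /\ qmax R `<=` U) &
  S = Defs.image R x `&` [set z | forall w, E z w -> U w].
have qcl : forall t m, qmax R m -> R m t -> qmax R t.
  by move=> t m qm mt s ts; apply: Rt (qm _ (Rt _ _ _ mt ts)) mt.
case: (pselect (forall B, P B -> B !=set0)) => ne.
- have [|||z Hz] := @directed_inter Y P cpt _ ne.
  + move=> B [U [cU _] ->]; apply: closedI; first exact: cR.1.
    exact: (clopen_box cE cU).2.
  + move=> B1 B2 [U1 [c1 q1] ->] [U2 [c2 q2] ->].
    exists (Defs.image R x `&` [set z | forall w, E z w -> (U1 `&` U2) w]).
      exists (U1 `&` U2) => //; split; first exact: clopenI.
      by move=> y qy; split; [exact: q1|exact: q2].
    by move=> y [xy h]; split; split => // w /h [].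
  + exists (Defs.image R x `&` [set z | forall w, E z w -> setT w]).
    by exists setT => //; split; [exact: clopenT|].
  have xz : R x z.
    have := Hz _ (ex_intro2 _ _ setT (conj clopenT (fun _ _ => I)) erefl).
    by case.
  have [w [Ezw nqw]] := key z xz.
  move/existsNP: nqw => [v /not_implyP [wv nvw]].
  have [m [vm qm]] := qmax_above fr v.
  have [A [cA mA nAw]] : exists A, [/\ clopen A, Defs.image R m `<=` A & ~ A w].
    apply: separation => //; first exact: cR.1.
    by move=> mw; apply: nvw; exact: Rt vm mw.
  pose U := [set y | (exists2 u, R y u & (forall t, R u t -> A t)) -> A y].
  have cU : clopen U.
    have -> : U = ~` Defs.preimage R [set u | forall t, R u t -> A t] `|` A.
      apply/seteqP; split => y /=.
      * move=> h; case: (pselect (A y)) => hA; [by right|left].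
        by move=> [u hu yu]; apply: hA; apply: h; exists u.
      * by case => [h [u yu hu]|hA _]; [exfalso; apply h; exists u|].
    apply: clopenU => //; apply: clopenC'; apply: cR.2; exact: clopen_box.
  have qU : qmax R `<=` U by move=> y qy [u yu hu]; apply: hu; exact: qy.
  have := Hz _ (ex_intro2 _ _ U (conj cU qU) erefl) => -[_ /(_ w Ezw)] Uw.
  by apply: nAw; apply: Uw; exists m; [exact: Rt wv vm | exact: mA].
- move/existsNP: ne => [B /not_implyP [[U [cU qU] eB] nB]].
  have := val lkur_axiom LKur_kur (fun _ => U) (fun _ => cU) x.
  rewrite /lkur_axiom /Dia /Neg /= => h; apply: h.
  + move=> y xy w Eyw h2; have [m [wm qm]] := qmax_above fr w.
    by apply: (h2 m wm) => t mt; apply: qU; exact: qcl qm mt.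
  + by move=> z xz h3; apply: nB; exists z; rewrite eB; split.
Qed.

Theorem theorem4p12 (Y : topologicalType) (R E : Y -> Y -> Prop) :
  descriptive_MS4_frame R E ->
  (validates_LKur R E <-> local_Kuroda R E).
Proof.
move=> fr; split; [exact: LKur_complete | exact: LKur_sound].
Qed.
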